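(* Let $\varphi$ be an Orlicz $N$-function with Young–Fenchel transform $\psi$. Let $\{X_{k,n},k\ge1,n\ge1\}$ be a double array of $\varphi$-subgaussian random variables, let $g$ be a positive non-decreasing function, set $a_{m,j}=g(\ln(mj))\psi^{-1}(\ln(mj))$, $Y_{m,j}=\max_{1\le k\le m,1\le n\le j}X_{k,n}-a_{m,j}$ and $Y^+_{m,j}=\max(Y_{m,j},0)$. Let $\alpha\in\mathbb R$. Suppose there is a positive-valued function $f$ such that for all $m,j\ge1$, $1\le k\le m$, $1\le n\le j$, $$\frac{g(\ln(mj))}{\tau_\varphi(X_{k,n})}\ge f\left(\frac{mj}{kn}\right)\ge1,$$ and $$\sum_{m=1}^\infty\sum_{j=1}^\infty\sum_{k=1}^m\sum_{n=1}^j(mj)^{-\alpha-f\left(\frac{mj}{kn}\right)}<+\infty.$$ Then $$\sum_{m=1}^\infty\sum_{j=1}^\infty(mj)^{-\alpha}P(Y^+_{m,j}>0)<+\infty.$$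
   Context: An Orlicz $N$-function is a continuous even convex function $\varphi:\mathbb R\to\mathbb R$ with $\varphi(0)=0$, increasing on $(0,\infty)$, with $\varphi(x)/x\to0$ as $x\to0$ and $\varphi(x)/x\to+\infty$ as $x\to+\infty$. The Young–Fenchel transform is $\psi(x)=\sup_{y\in\mathbb R}(xy-\varphi(y))$ (itself an Orlicz $N$-function); $\psi^{-1}$ is the inverse of $\psi$ on $[0,\infty)$. A random variable $X$ is $\varphi$-subgaussian if $EX=0$ and there is a finite $a>0$ with $E\exp(tX)\le\exp(\varphi(at))$ for all $t$; $\tau_\varphi(X)=\inf\{a>0:E\exp(tX)\le\exp(\varphi(at))\ \forall t\}$. *)

(* Defs.v *)
From HB Require Import structures.
From mathcomp Require Import all_boot all_order all_algebra.
From mathcomp Require Import all_classical all_reals all_analysis.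
Set Implicit Arguments. Unset Strict Implicit. Unset Printing Implicit Defensive.
Import Order.TTheory GRing.Theory Num.Theory.
Import numFieldNormedType.Exports.
Local Open Scope classical_set_scope.
Local Open Scope ring_scope.

Definition N_function (R : realType) (phi : R -> R) : Prop :=
  continuous phi /\
  (forall x, phi (- x) = phi x) /\
  (forall x y (l : R), 0 <= l <= 1 ->
     phi (l * x + (1 - l) * y) <= l * phi x + (1 - l) * phi y) /\
  phi 0 = 0 /\
  (forall x y, 0 < x -> x < y -> phi x < phi y) /\
  (fun x => phi x / x) @ 0^' --> 0 /\
  (fun x => phi x / x) @ +oo --> +oo.

Definition young_fenchel (R : realType) (phi : R -> R) (x : R) : R :=
  sup [set x * y - phi y | y in [set: R]].

(* inverse of psi on [0,oo): psi is a continuous increasing bijection of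
   [0,oo) onto itself, so psi^{-1}(x) = sup {y >= 0 | psi y <= x}. *)
Definition young_fenchel_inv (R : realType) (phi : R -> R) (x : R) : R :=
  sup [set y | 0 <= y /\ young_fenchel phi y <= x].

Definition mgf_bound (R : realType) d (T : measurableType d)
  (P : probability T R) (phi : R -> R) (X : T -> R) (a : R) : Prop :=
  forall t : R, (\int[P]_w (expR (t * X w))%:E <= (expR (phi (a * t)))%:E)%E.

Definition phi_subgaussian (R : realType) d (T : measurableType d)
  (P : probability T R) (phi : R -> R) (X : {RV P >-> R}) : Prop :=
  P.-integrable setT (EFin \o X) /\ ('E_P[X] = 0)%E /\
  exists a : R, 0 < a /\ mgf_bound P phi X a.

Definition tau_phi (R : realType) d (T : measurableType d)
  (P : probability T R) (phi : R -> R) (X : T -> R) : R :=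
  inf [set a : R | 0 < a /\ mgf_bound P phi X a].

Definition max_array (R : realType) (T : Type) (X : nat -> nat -> T -> R)
  (m j : nat) (w : T) : R :=
  \big[Num.max/X 1%N 1%N w]_(1 <= k < m.+1)
     \big[Num.max/X 1%N 1%N w]_(1 <= n < j.+1) X k n w.

Arguments mgf_bound {R d T} P phi X a.
Arguments phi_subgaussian {R d T} P phi X.
Arguments tau_phi {R d T} P phi X.

(* Main.v *)
Require Import Defs.
From HB Require Import structures.
From mathcomp Require Import all_boot all_order all_algebra.
From mathcomp Require Import all_classical all_reals all_analysis.
From mathcomp Require Import ring lra.
Set Implicit Arguments. Unset Strict Implicit. Unset Printing Implicit Defensive.
Import Order.TTheory GRing.Theory Num.Theory.
Import numFieldNormedType.Exports.
Local Open Scope classical_set_scope.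
Local Open Scope ring_scope.


Section phi.
Variables (R : realType) (phi : R -> R) (Hphi : N_function phi).

Lemma phi_ge0 x : 0 <= phi x.
Proof.
case: Hphi => _ [Hev [Hcv [H0 _]]].
have h : 0 <= (2^-1 : R) <= 1 by apply/andP; split; lra.
have := Hcv x (- x) (2^-1) h.
have -> : 2^-1 * x + (1 - 2^-1) * - x = 0 :> R by field.
rewrite H0 Hev => H; lra.
Qed.

Lemma phi_superlin M : exists S, 0 < S /\ forall s, S <= `|s| -> M * `|s| <= phi s.
Proof.
case: Hphi => _ [Hev [_ [_ [_ [_ Hinf]]]]].
have [M0 [_ HM]] := (proj1 (cvgryPge _) Hinf M).
exists (Num.max (M0 + 1) 1); split; first by rewrite lt_max ltr01 orbT.
move=> s Hs.
have Hs1 : M0 < `|s| by apply: (lt_le_trans _ Hs); rewrite lt_max ltrDl ltr01.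
have Hs0 : 0 < `|s| by apply: (lt_le_trans _ Hs); rewrite lt_max ltr01 orbT.
have := HM _ Hs1; rewrite ler_pdivlMr //.
have -> : phi `|s| = phi s by case: (ger0P s) => _ //; rewrite Hev.
by [].
Qed.

Lemma yf_has_sup x : has_sup [set x * y - phi y | y in [set: R]].
Proof.
split; first by exists (x * 0 - phi 0), 0.
have [S [S0 HS]] := phi_superlin (`|x| + 1).
exists (`|x| * S) => _ [y _ <-].
have hxy : x * y <= `|x| * `|y|.
  by rewrite -normrM ler_norm.
case: (leP S `|y|) => Hy.
  have := HS _ Hy.
  have := phi_ge0 y.
  have : 0 <= `|x| * S by rewrite mulr_ge0 // ltW.
  have : 0 <= `|y| by [].
  nra.
have := phi_ge0 y.
have : `|x| * `|y| <= `|x| * S by rewrite ler_wpM2l // ltW.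
lra.
Qed.

Lemma yf_ge x y : x * y - phi y <= young_fenchel phi x.
Proof. by apply: sup_upper_bound; [exact: yf_has_sup | exists y]. Qed.

Lemma yf_lub x b : (forall y, x * y - phi y <= b) -> young_fenchel phi x <= b.
Proof.
move=> H; apply: sup_le_ub; first by exists (x * 0 - phi 0), 0.
by move=> _ [y _ <-].
Qed.

Lemma yf_approx x e : 0 < e -> exists y, young_fenchel phi x - e < x * y - phi y.
Proof.
move=> e0; have [_ [y _ <-] H] := sup_adherent e0 (yf_has_sup x).
by exists y.
Qed.

Lemma yf_scale c u : 1 <= c -> c * young_fenchel phi u <= young_fenchel phi (c * u).
Proof.
move=> c1; rewrite mulrC -ler_pdivlMr; last lra.
apply: yf_lub => y; rewrite ler_pdivlMr; last lra.
apply: le_trans (yf_ge (c * u) y).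
have := phi_ge0 y; nra.
Qed.


Lemma yf0 : young_fenchel phi 0 <= 0.
Proof. by apply: yf_lub => y; rewrite mul0r sub0r oppr_le0 phi_ge0. Qed.

Lemma yfi_prop L : 0 <= L ->
  0 <= young_fenchel_inv phi L /\ L <= young_fenchel phi (young_fenchel_inv phi L).
Proof.
move=> L0.
set E := [set y | 0 <= y /\ young_fenchel phi y <= L].
have E0 : E 0 by split => //; apply: le_trans yf0 L0.
have hsE : has_sup E.
  split; first by exists 0.
  exists (L + phi 1) => y [y0 Hy].
  have := yf_ge y 1; rewrite mulr1 => h; lra.
have ubE := sup_upper_bound hsE.
rewrite /young_fenchel_inv -/E.
set u := sup E.
have u0 : 0 <= u by exact: ubE.
split => //.
apply/ler_addgt0Pr => e e0.
have [S [S0 HS]] := phi_superlin (u + 1).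
set dl := Num.min 1 (e / S).
have dl0 : 0 < dl by rewrite lt_min ltr01 divr_gt0.
have dl1 : dl <= 1 by rewrite ge_min lexx.
have dlS : dl * S <= e by rewrite -ler_pdivlMr // ge_min lexx orbT.
set y := u + dl.
have yE : ~ E y by move=> /ubE; rewrite -/u /y => h; lra.
have y0 : 0 <= y by rewrite /y; lra.
have Ly : L < young_fenchel phi y.
  by rewrite ltNge; apply/negP => h; apply: yE.
have Ly0 : 0 < young_fenchel phi y - L by rewrite subr_gt0.
have [s Hs] := yf_approx y Ly0.
have Hs' : L < y * s - phi s by move: Hs; rewrite opprB addrC subrK.
have sS : `|s| < S.
  rewrite ltNge; apply/negP => /HS h.
  have : y * s <= y * `|s| by rewrite ler_wpM2l // ler_norm.
  have : y * `|s| <= (u + 1) * `|s| by rewrite ler_wpM2r // /y; lra.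
  lra.
have := yf_ge u s.
have : dl * s <= dl * `|s| by apply: ler_wpM2l; [exact: ltW | exact: ler_norm].
have : dl * `|s| <= dl * S by rewrite ler_wpM2l ?ltW // ltW.
have ys : y * s = u * s + dl * s by rewrite /y mulrDl.
lra.
Qed.

End phi.
Section prob.
Variables (R : realType) (d : measure_display) (T : measurableType d) (P : probability T R).

Lemma meas_gt (X : {RV P >-> R}) c : measurable [set w | c < X w].
Proof.
have -> : [set w | c < X w] = X @^-1` `]c, +oo[%classic.
  by apply/seteqP; split => w /=; rewrite in_itv /= andbT.
exact: measurable_funPTI.
Qed.

Lemma exp_lim (A : set T) (z : R) : measurable A ->
  (forall e, 0 < e -> (P A <= (expR (z + e))%:E)%E) -> (P A <= (expR z)%:E)%E.
Proof.
move=> mA H.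
have P0 := measure_ge0 P A.
have Pfin : P A \is a fin_num.
  by rewrite ge0_fin_numE // (le_lt_trans (probability_le1 P mA)) // ltey.
rewrite -(fineK Pfin) lee_fin.
have p0 : 0 <= fine (P A) by rewrite fine_ge0.
case: (ltP 0 (fine (P A))) => p0'; last first.
  by rewrite (@le_anti _ _ (fine (P A)) 0) ?p0' ?p0 // expR_ge0.
rewrite -ler_ln ?posrE ?expR_gt0 // expRK.
apply/ler_addgt0Pr => e e0.
have := H e e0; rewrite -(fineK Pfin) lee_fin -ler_ln ?posrE ?expR_gt0 // expRK.
all: try done.
Qed.


Lemma meas_ge (X : {RV P >-> R}) c : measurable [set w | c <= X w].
Proof.
have -> : [set w | c <= X w] = X @^-1` `[c, +oo[%classic.
  by apply/seteqP; split => w /=; rewrite in_itv /= andbT.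
exact: measurable_funPTI.
Qed.

Lemma step1 phi (X : {RV P >-> R}) x s a : 0 < s -> 0 < a -> mgf_bound P phi X a ->
  (P [set w | (x < X w)%R] <= (expR (phi s - s * x / a))%:E)%E.
Proof.
move=> s0 a0 Hm.
apply: (@le_trans _ _ (P [set w | x <= X w])).
  apply: le_measure; rewrite ?inE; [exact: meas_gt | exact: meas_ge |].
  by move=> w /= /ltW.
have r0 : 0 < s / a by rewrite divr_gt0.
apply: le_trans (chernoff _ _ r0) _.
have -> : ('M_P X (s / a) = \int[P]_w (expR (s / a * X w))%:E)%E.
  by rewrite /mmt_gen_fun unlock; apply: eq_integral => w _ /=; rewrite mulrC.
apply: le_trans (lee_wpmul2r _ (Hm (s / a))) _; first by rewrite lee_fin expR_ge0.
rewrite -EFinM lee_fin -expRD.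
have -> : a * (s / a) = s by field; rewrite gt_eqF.
by rewrite mulrAC.
Qed.


Lemma tail phi (Hphi : N_function phi) (X : {RV P >-> R}) x :
  0 <= x -> 0 < tau_phi P phi X -> (exists a, 0 < a /\ mgf_bound P phi X a) ->
  (P [set w | (x < X w)%R] <= (expR (- young_fenchel phi (x / tau_phi P phi X)))%:E)%E.
Proof.
move=> x0 t0 [a0 [a00 Ha0]].
set tau := tau_phi P phi X in t0 *.
set E := [set a | 0 < a /\ mgf_bound P phi X a].
have hiE : has_inf E.
  split; first by exists a0.
  by exists 0 => y [/ltW].
apply: exp_lim; first exact: meas_gt.
move=> e e0.
have e20 : 0 < e / 2 by rewrite divr_gt0.
have [s Hs] := yf_approx Hphi (x / tau) e20.
have xt0 : 0 <= x / tau by rewrite divr_ge0 // ltW.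
have Hev : phi `|s| = phi s.
  by case: Hphi => _ [Hev _]; case: (ger0P s) => _ //; rewrite Hev.
have Hs' : young_fenchel phi (x / tau) - e / 2 < x / tau * `|s| - phi `|s|.
  rewrite Hev; apply: lt_le_trans Hs _; rewrite lerD2r ler_wpM2l //.
  exact: ler_norm.
case: (ltP 0 `|s|) => sp; last first.
  have s0 : `|s| = 0 by apply/le_anti; rewrite sp normr_ge0.
  apply: le_trans (probability_le1 P (meas_gt X x)) _.
  rewrite lee_fin -expR0 ler_expR.
  move: Hs'; rewrite s0 mulr0 sub0r; case: Hphi => _ [_ [_ [-> _]]].
  lra.
set K := `|s| * x.
have K0 : 0 <= K by rewrite mulr_ge0.
set dl := e / 2 * (tau * tau) / (K + 1).
have dl0 : 0 < dl by rewrite divr_gt0 ?mulr_gt0 //; lra.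
have [a Ea Ha] := inf_adherent dl0 hiE.
have ta : tau <= a by apply: ge_inf => //; case: hiE.
case: Ea => a0' Hma.
apply: le_trans (step1 x sp a0' Hma) _.
rewrite lee_fin ler_expR.
have key : K / tau - K / a <= e / 2.
  have -> : K / tau - K / a = (K * (a - tau)) / (a * tau).
    by field; apply/andP; split; rewrite gt_eqF.
  rewrite ler_pdivrMr ?mulr_gt0 //.
  have h1 : K * (a - tau) <= K * dl.
    by rewrite ler_wpM2l //; move: Ha; rewrite -/tau; lra.
  have h2 : K * dl <= e / 2 * (tau * tau).
    rewrite /dl mulrA ler_pdivrMr; last lra.
    have : 0 <= e / 2 * (tau * tau) by rewrite mulr_ge0 // ?mulr_ge0 // ltW.
    nra.
  have h3 : e / 2 * (tau * tau) <= e / 2 * (a * tau).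
    apply: ler_wpM2l; first exact: ltW.
    by apply: ler_wpM2r => //; exact: ltW.
  lra.
have -> : `|s| * x / a = K / a by [].
have : x / tau * `|s| = K / tau by rewrite /K mulrC mulrA.
lra.
Qed.


Lemma union_bound (A : nat -> set T) (r : seq nat) : (forall i, measurable (A i)) ->
  measurable [set w | exists2 i, i \in r & A i w] /\
  (P [set w | exists2 i, i \in r & A i w] <= \sum_(i <- r) P (A i))%E.
Proof.
move=> mA; elim: r => [|i r [mr IH]].
  have -> : [set w | exists2 i, i \in [::] & A i w] = set0.
    by apply/seteqP; split => w //= [i]; rewrite in_nil.
  by rewrite measure0 big_nil.
have -> : [set w | exists2 j, j \in i :: r & A j w] =
    A i `|` [set w | exists2 j, j \in r & A j w].
  apply/seteqP; split => w /=.
    by move=> [j]; rewrite in_cons => /orP [/eqP -> | jr] Aj; [left | right; exists j].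
  by case => [Aw | [j jr Aj]]; [exists i => //; exact: mem_head | exists j => //; rewrite in_cons jr orbT].
split; first exact: measurableU.
rewrite big_cons; apply: le_trans (measureU2 _ (mA i) mr) _.
exact: leeD.
Qed.

End prob.

Lemma bigmax_gtP (R : realType) (c x0 : R) (r : seq nat) (h : nat -> R) :
  c < \big[Num.max/x0]_(i <- r) h i <-> c < x0 \/ exists2 i, i \in r & c < h i.
Proof.
elim: r => [|i r IH].
  rewrite big_nil; split; first by left.
  by case => // [[i]]; rewrite in_nil.
rewrite big_cons lt_max; split.
  case/orP => [hi | /IH [l | [j jr hj]]]; [right; exists i => //; exact: mem_head | by left |].
  by right; exists j => //; rewrite in_cons jr orbT.
case => [l | [j]]; first by apply/orP; right; apply/IH; left.
rewrite in_cons => /orP [/eqP -> -> // | jr hj].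
by apply/orP; right; apply/IH; right; exists j.
Qed.

Lemma lee_nneseriesN (R : realType) (u v : (\bar R)^nat) N :
  (forall i, (N <= i)%N -> (0 <= u i)%E) -> (forall n, (N <= n)%N -> (u n <= v n)%E) ->
  (\sum_(N <= i <oo) u i <= \sum_(N <= i <oo) v i)%E.
Proof.
move=> u0 uv; rewrite !ereal_series; apply: lee_nneseries => // i _; exact: u0.
Qed.

Definition aF (R : realType) (g : R -> R) (phi : R -> R) (m j : nat) : R :=
  g (ln (m * j)%:R) * young_fenchel_inv phi (ln (m * j)%:R).
Definition YpF (R : realType) (T : Type) (X : nat -> nat -> T -> R) (g : R -> R) (phi : R -> R)
  (m j : nat) (w : T) : R := Num.max (max_array X m j w - aF g phi m j) 0.

Lemma aux (R : realType) (d : measure_display) (T : measurableType d)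
  (P : probability T R) (phi : R -> R) (X : nat -> nat -> {RV P >-> R})
  (g : R -> R) (f : R -> R) (alpha : R) :
  N_function phi ->
  (forall k n, (1 <= k)%N -> (1 <= n)%N -> phi_subgaussian P phi (X k n)) ->
  (forall x, 0 < g x) ->
  (forall x y, x <= y -> g x <= g y) ->
  (forall m j k n, (1 <= k <= m)%N -> (1 <= n <= j)%N ->
     g (ln (m * j)%:R) / tau_phi P phi (X k n) >= f ((m * j)%:R / (k * n)%:R)
     /\ f ((m * j)%:R / (k * n)%:R) >= 1) ->
  (\sum_(1 <= m <oo) \sum_(1 <= j <oo)
     (\sum_(1 <= k < m.+1) \sum_(1 <= n < j.+1)
        ((m * j)%:R `^ (- alpha - f ((m * j)%:R / (k * n)%:R)))%:E) < +oo)%E ->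
  (\sum_(1 <= m <oo) \sum_(1 <= j <oo)
     ((m * j)%:R `^ (- alpha))%:E * P [set w | (0 < YpF (fun k n => (X k n : T -> R)) g phi m j w)%R] < +oo)%E.
Proof.
move=> Hphi Hsg gpos gmono Hf Hsum.
apply: le_lt_trans Hsum.
have t1ge0 : forall m j, (0 <= ((m * j)%:R `^ (- alpha))%:E * P [set w | (0 < YpF (fun k n => (X k n : T -> R)) g phi m j w)%R])%E.
  by move=> m j; apply: mule_ge0; [rewrite lee_fin powR_ge0 | exact: measure_ge0].
apply: lee_nneseriesN => [m m1 | m m1].
  by apply: nneseries_ge0 => j _ _.
apply: lee_nneseriesN => [j j1 // | j j1].
pose L : R := ln (m * j)%:R.
have mj1 : (1 <= m * j)%N by rewrite muln_gt0 m1 j1.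
have mjR : 1 <= (m * j)%:R :> R by rewrite ler1n.
have mj0 : (m * j)%:R != 0 :> R by rewrite gt_eqF // (lt_le_trans ltr01).
have L0 : 0 <= L by rewrite ln_ge0.
have [u0 uL] := yfi_prop Hphi L0.
have am0 : 0 <= aF g phi m j by rewrite mulr_ge0 // ltW.
set rk := index_iota 1 m.+1.
set rn := index_iota 1 j.+1.
have m1r : (1 \in rk)%N by rewrite mem_index_iota; apply/andP; split => //; exact: m1.
have j1r : (1 \in rn)%N by rewrite mem_index_iota; apply/andP; split => //; exact: j1.
have Hset : [set w | (0 < YpF (fun k n => (X k n : T -> R)) g phi m j w)%R] =
   [set w | exists2 k, k \in rk & [set w | exists2 n, n \in rn & (aF g phi m j < X k n w)%R] w].
  apply/seteqP; split => w /=.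
  - rewrite /YpF lt_max ltxx orbF subr_gt0 /max_array.
    move=> /bigmax_gtP [h | [k kr /bigmax_gtP [h | [n nr h]]]].
    + by exists 1%N => //; exists 1%N.
    + by exists 1%N => //; exists 1%N.
    + by exists k => //; exists n.
  - move=> [k kr [n nr h]]; rewrite /YpF lt_max ltxx orbF subr_gt0 /max_array.
    by apply/bigmax_gtP; right; exists k => //; apply/bigmax_gtP; right; exists n.
rewrite Hset.
have mk : forall k, measurable [set w | exists2 n, n \in rn & (aF g phi m j < X k n w)%R].
  move=> k; have [h _] := @union_bound _ _ _ P (fun n => [set w | (aF g phi m j < X k n w)%R]) rn
     (fun n => meas_gt (X k n) _).
  exact: h.
have [_ UB] := @union_bound _ _ _ P (fun k => [set w | exists2 n, n \in rn & (aF g phi m j < X k n w)%R]) rk mk.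
have c0 : (0 <= ((m * j)%:R `^ (- alpha))%:E :> \bar R)%E by rewrite lee_fin powR_ge0.
apply: le_trans (lee_wpmul2l c0 UB) _.
rewrite ge0_sume_distrr; last by move=> k _; exact: measure_ge0.
rewrite [leLHS]big_seq [leRHS]big_seq; apply: lee_sum => k kr.
have [_ UBk] := @union_bound _ _ _ P (fun n => [set w | (aF g phi m j < X k n w)%R]) rn
     (fun n => meas_gt (X k n) _).
apply: le_trans (lee_wpmul2l c0 UBk) _.
rewrite ge0_sume_distrr; last by move=> n _; exact: measure_ge0.
rewrite [leLHS]big_seq [leRHS]big_seq; apply: lee_sum => n nr.
move: kr nr; rewrite !mem_index_iota ltnS => hk hn.
have [Hg Hf1] := Hf m j k n hk hn.
have [k1 _] := andP hk.
have [n1 _] := andP hn.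
have [_ [_ [a0 [a00 Ha0]]]] := Hsg k n k1 n1.
set tau := tau_phi P phi (X k n) in Hg.
have tau0 : 0 <= tau.
  apply: lb_le_inf; first by exists a0.
  by move=> y [/ltW].
have taup : 0 < tau.
  rewrite lt_neqAle tau0 andbT; apply/negP => /eqP t0.
  by move: Hg; rewrite -t0 invr0 mulr0 => h; have := le_trans Hf1 h; rewrite ler10.
set F := f _ in Hg Hf1 *.
rewrite powRD; last by rewrite mj0 implybT.
rewrite [leRHS]EFinM; apply: (lee_wpmul2l c0).
apply: le_trans (@tail _ _ _ P phi Hphi (X k n) _ am0 taup (ex_intro _ a0 (conj a00 Ha0))) _.
rewrite lee_fin /powR (negbTE mj0) ler_expR -/L -/tau mulNr lerN2.
set c := g L / tau.
have c1 : 1 <= c by apply: le_trans Hf1 Hg.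
have -> : aF g phi m j / tau = c * young_fenchel_inv phi L by rewrite /c /aF mulrAC.
apply: le_trans (yf_scale Hphi _ c1).
apply: (@le_trans _ _ (c * L)).
  by apply: ler_wpM2r.
by rewrite ler_wpM2l // (le_trans ler01 c1).
Qed.

Unset Implicit Arguments.
Set Strict Implicit.

Theorem theorem4 (R : realType) (d : measure_display) (T : measurableType d)
  (P : probability T R) (phi : R -> R) (X : nat -> nat -> {RV P >-> R})
  (g : R -> R) (f : R -> R) (alpha : R) :
  N_function phi ->
  (forall k n, (1 <= k)%N -> (1 <= n)%N -> phi_subgaussian P phi (X k n)) ->
  (forall x, 0 < g x) ->
  (forall x y, x <= y -> g x <= g y) ->
  (forall m j k n, (1 <= k <= m)%N -> (1 <= n <= j)%N ->
     g (ln (m * j)%:R) / tau_phi P phi (X k n) >= f ((m * j)%:R / (k * n)%:R)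
     /\ f ((m * j)%:R / (k * n)%:R) >= 1) ->
  (\sum_(1 <= m <oo) \sum_(1 <= j <oo)
     (\sum_(1 <= k < m.+1) \sum_(1 <= n < j.+1)
        ((m * j)%:R `^ (- alpha - f ((m * j)%:R / (k * n)%:R)))%:E) < +oo)%E ->
  let a := fun m j : nat => g (ln (m * j)%:R) * young_fenchel_inv phi (ln (m * j)%:R) in
  let Y := fun m j w => max_array (fun k n => (X k n : T -> R)) m j w - a m j in
  let Yplus := fun m j w => Num.max (Y m j w) 0 in
  (\sum_(1 <= m <oo) \sum_(1 <= j <oo)
     ((m * j)%:R `^ (- alpha))%:E * P [set w | (0 < Yplus m j w)%R] < +oo)%E.
Proof.
move=> Hphi Hsg gpos gmono Hf Hsum; exact: (aux Hphi Hsg gpos gmono Hf Hsum).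
Qed.
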